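(* Let $q\in\mathbb{N}$, $q\ge 1$, and $p\ge 3$. If a graph $G$ is $p$-ordered, then the $q$-complete graph $C_q(G)$ is $q(p-1)$-connected.
   Context: For a graph $G=(V,E)$ and $q\ge 1$, the $q$-complete graph $C_q(G)=(V_q,E_q)$ has vertex set $V_q=V^1\uplus\dots\uplus V^q$, where $V^i=\{v^i\mid v\in V\}$ is a copy of $V$, and edge set $E_q=\bigcup_{i,j\in\{1,\dots,q\}}\{\{u^i,v^j\}\mid \{u,v\}\in E\}$. For an integer $p\ge 3$, a graph is $p$-ordered if for every $p$-tuple $(x_1,\dots,x_p)$ of distinct vertices there is a cycle visiting $x_1,\dots,x_p$ in this order. A graph is $k$-connected if it has more than $k$ vertices and remains connected after deleting any set of fewer than $k$ vertices. *)

(* Defs.v *)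
From mathcomp Require Import all_boot.
Set Implicit Arguments. Unset Strict Implicit. Unset Printing Implicit Defensive.

(* A (finite simple) graph is a symmetric irreflexive relation e on a finType. *)

Definition is_graph_cycle (T : finType) (e : rel T) (c : seq T) : Prop :=
  [/\ 3 <= size c, uniq c & cycle e c].

(* Since a cycle may be rotated/reversed as a list, "visiting
   x_1,...,x_p in this order" is expressed as xs being a subsequence of c. *)
Definition p_ordered (T : finType) (e : rel T) (p : nat) : Prop :=
  forall xs : seq T, size xs = p -> uniq xs ->
    exists c : seq T, is_graph_cycle e c /\ subseq xs c.

(* The q-complete graph C_q(G): vertices (v, i) with i < q (the copy v^i),
   and {u^i, v^j} an edge iff {u, v} is an edge of G. *)
Definition qcomplete (T : finType) (e : rel T) (q : nat) : rel (T * 'I_q) :=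
  fun x y => e x.1 y.1.
Arguments qcomplete [T] e q _ _.

Definition induced_minus (V : finType) (r : rel V) (S : {set V}) : rel V :=
  fun x y => [&& r x y, x \notin S & y \notin S].

Definition k_connected (V : finType) (r : rel V) (k : nat) : Prop :=
  k < #|V| /\
  forall S : {set V}, #|S| < k ->
    forall x y : V, x \notin S -> y \notin S -> connect (induced_minus r S) x y.

(* Main.v *)
Require Import Defs.
From mathcomp Require Import all_boot.
From mathcomp Require Import zify.
Set Implicit Arguments. Unset Strict Implicit. Unset Printing Implicit Defensive.

Lemma subseq_split (T : eqType) (x : T) (s c : seq T) :
  subseq (x :: s) c -> exists c1 c2, c = c1 ++ x :: c2 /\ subseq s c2.
Proof.
elim: c => [|y c IH] /=; first by [].
case: eqP => [<-|_] H.
  by exists [::], c.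
have [c1 [c2 [-> H2]]] := IH H.
by exists (y :: c1), c2.
Qed.

Section Main.
Variables (T : finType) (e : rel T) (q : nat).
Hypothesis esym : symmetric e.
Variable S : {set T * 'I_q}.
Let E := induced_minus (qcomplete e q) S.
Definition RR a b := forall i j, (a, i) \notin S -> (b, j) \notin S ->
  connect E (a, i) (b, j).
Definition good v := [exists k, (v, k) \notin S].

Lemma RR_edge a b : e a b -> RR a b.
Proof. by move=> eab i j Hi Hj; apply: connect1; rewrite /E /induced_minus /qcomplete /= eab Hi Hj. Qed.

Lemma RR_trans a b c : good b -> RR a b -> RR b c -> RR a c.
Proof.
move=> /existsP [k Hk] H1 H2 i j Hi Hj.
exact: connect_trans (H1 i k Hi Hk) (H2 k j Hk Hj).
Qed.

Lemma RR_path s a b : all good s -> path e a (rcons s b) -> RR a b.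
Proof.
elim: s a => [|y s IH] a /=; first by move=> _ /andP [H _]; apply: RR_edge.
move=> /andP [gy gs] /andP [ay P].
exact: RR_trans gy (RR_edge ay) (IH y gs P).
Qed.
End Main.

Theorem lemma5p5 (T : finType) (e : rel T) (q p : nat) :
  1 <= q -> 3 <= p ->
  symmetric e -> irreflexive e ->
  p <= #|T| ->
  p_ordered e p ->
  k_connected (qcomplete e q) (q * (p - 1)).
Proof.
move=> q1 p3 esym eirr pT pord; split.
  rewrite card_prod card_ord; nia.
move=> S HS [a i] [b j] Ha Hb.
pose D := [set v | ~~ good S v].
have HD : #|D| < p - 1.
  have sub : setX D [set: 'I_q] \subset S.
    apply/subsetP => [[v k]]; rewrite !inE /= andbT /good negb_exists.
    by move=> /forallP /(_ k); rewrite negbK.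
  have := subset_leq_card sub; rewrite cardsX cardsT card_ord => H.
  by have := leq_ltn_trans H HS; rewrite mulnC ltn_pmul2l.
have goodD v : (v \in D) = ~~ good S v by rewrite inE.
have Rgen : forall a b, good S a -> good S b -> a != b -> @RR T e q S a b.
  move=> a' b' ga gb nab.
  pose C := ~: (D :|: [set a'; b']).
  pose rest := take (p - 2) (enum D ++ enum C).
  have sz : size rest = p - 2.
    rewrite size_take size_cat -!cardE.
    have : #|D :|: [set a'; b']| <= #|D| + 2.
      rewrite cardsU cards2 nab; lia.
    have := cardsC (D :|: [set a'; b']).
    rewrite -/C => H1 H2.
    case: ltnP => //; lia.
  have Dr : {subset D <= rest}.
    move=> v vD; rewrite /rest -(cat_take_drop #|D| (take _ _)).
    rewrite mem_cat; apply/orP; left.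
    rewrite take_takel; last by lia.
    by rewrite take_size_cat ?mem_enum // cardE.
  have ur : uniq rest.
    apply: take_uniq; rewrite cat_uniq !enum_uniq /= andbT.
    by apply/hasPn => v; rewrite !mem_enum !inE; case: (good S v).
  have ar : forall v, v \in rest -> (v != a') && (v != b').
    move=> v /mem_take; rewrite mem_cat !mem_enum => /orP [vD|].
      apply/andP; split; apply/eqP => E; move: vD; rewrite goodD E ?ga ?gb //.
    by rewrite !inE => /norP [_ /norP [? ?]]; apply/andP.
  have [c [[_ uc cc] sc]] : exists c, is_graph_cycle e c /\ subseq [:: a', b' & rest] c.
    apply: pord => /=; first by rewrite sz; lia.
    rewrite inE negb_or nab ur andbT.
    apply/andP; split; apply/negP => /ar; rewrite eqxx //= andbF //.
  have [c1 [d [Ec Sd]]] := subseq_split sc.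
  have [d1 [c3 [Ed Sc3]]] := subseq_split Sd.
  subst c d.
  move: cc; rewrite (cycle_path a') cat_path /= cat_path /= => /and5P [_ _ P1 P2 _].
  have Pr : path e a' (rcons d1 b') by rewrite rcons_path P1 P2.
  apply: (@RR_path T e q S d1 a' b' _ Pr).
  apply/allP => z zd.
  move: uc; rewrite cat_uniq /= cat_uniq => /and3P [_ _ /andP [_ /and3P [_ /hasPn Hh _]]].
  have zc3 : z \notin c3 by apply/negP => zc3; move: (Hh z); rewrite inE zc3 orbT zd => /(_ isT).
  suff : z \notin D by rewrite goodD negbK.
  apply/negP => zD.
  by move: zc3; rewrite (mem_subseq Sc3) // Dr.
have ga : good S a by apply/existsP; exists i.
have gb : good S b by apply/existsP; exists j.
case: (eqVneq a b) => [Eab|nab]; last exact: Rgen.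
subst b.
have : 1 < #|~: D| by have := cardsC D; lia.
rewrite (cardsD1 a) inE goodD negbK ga /= => /card_gt0P [w].
rewrite in_setD1 in_setC goodD negbK => /andP [wa gw].
have aw : a != w by rewrite eq_sym.
exact: RR_trans gw (Rgen _ _ ga gw aw) (Rgen _ _ gw ga wa) i j Ha Hb.
Qed.
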